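(* Let $G$ be a finite group and $p$ a prime such that $G$ has no redundant Sylow $p$-subgroup. Then $|G_p|\geq \nu_p(G)$.
   Context: For a finite group $G$ and a prime $p$, $G_p$ denotes the set of $p$-elements of $G$, $\mathrm{Syl}_p(G)$ the set of Sylow $p$-subgroups of $G$, and $\nu_p(G)=|\mathrm{Syl}_p(G)|$. $G$ is said to have a redundant Sylow $p$-subgroup if $G_p$ is contained in the union of the members of some proper subset of $\mathrm{Syl}_p(G)$. *)

(* Defs.v *)
From mathcomp Require Import all_boot all_fingroup all_solvable.
Set Implicit Arguments. Unset Strict Implicit. Unset Printing Implicit Defensive.
Local Open Scope group_scope.

Definition p_elements (gT : finGroupType) (p : nat) (G : {set gT}) : {set gT} :=
  [set x in G | p.-elt x].

Definition nu (gT : finGroupType) (p : nat) (G : {set gT}) : nat := #|'Syl_p(G)|.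

Definition has_redundant_sylow (gT : finGroupType) (p : nat) (G : {set gT}) : Prop :=
  exists S : {set {group gT}},
    S \proper 'Syl_p(G) /\ p_elements p G \subset \bigcup_(P in S) P.

(* Main.v *)
Require Import Defs.
From mathcomp Require Import all_boot all_fingroup all_solvable.
Set Implicit Arguments. Unset Strict Implicit. Unset Printing Implicit Defensive.
Local Open Scope group_scope.

Lemma unique_witness (gT : finGroupType) (G : {group gT}) (p : nat) (P : {group gT}) :
  ~ has_redundant_sylow p G -> P \in 'Syl_p(G) ->
  exists x, [&& x \in p_elements p G, x \in P &
     [forall Q in 'Syl_p(G), (x \in Q) ==> (Q == P)]].
Proof.
move=> nored sylP.
set b := [exists x, [&& x \in p_elements p G, x \in P &
     [forall Q in 'Syl_p(G), (x \in Q) ==> (Q == P)]]].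
case Hb: b; first by case/existsP: Hb => x Hx; exists x.
move/negbT/existsPn: Hb => H; exfalso; apply: nored.
exists ('Syl_p(G) :\ P); split; first exact: properD1.
apply/subsetP => x xGp.
have := xGp; rewrite inE => /andP [xG xp].
have xsG : <[x]> \subset G by rewrite cycle_subG.
have [Q sylQ xQ] := Sylow_superset xsG xp.
rewrite cycle_subG in xQ.
have sylQ' : Q \in 'Syl_p(G) by rewrite inE.
case: (eqVneq Q P) => [eQP | nQP].
  have := H x; rewrite xGp -eQP xQ /=; move=> /forallPn [R].
  rewrite negb_imply => /andP [sylR]; rewrite negb_imply => /andP [xR nRQ].
  apply/bigcupP; exists R => //; by rewrite in_setD1 sylR andbT.
apply/bigcupP; exists Q => //; by rewrite in_setD1 sylQ' andbT nQP.
Qed.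

Theorem corollary2p7 (gT : finGroupType) (G : {group gT}) (p : nat) :
  prime p -> ~ has_redundant_sylow p G -> nu p G <= #|p_elements p G|.
Proof.
move=> _ nored.
pose f (P : {group gT}) := odflt 1 [pick x | [&& x \in p_elements p G, x \in P &
     [forall Q in 'Syl_p(G), (x \in Q) ==> (Q == P)]]].
have fP : forall P, P \in 'Syl_p(G) -> [&& f P \in p_elements p G, f P \in P &
     [forall Q in 'Syl_p(G), (f P \in Q) ==> (Q == P)]].
  move=> P sylP; rewrite /f; case: pickP => [x Hx //|H0].
  by have [x Hx] := unique_witness nored sylP; rewrite H0 in Hx.
rewrite /nu -(card_in_imset (f := f)).
  apply: subset_leq_card; apply/subsetP => y /imsetP [P sylP ->].
  by case/and3P: (fP P sylP).
move=> P Q sylP sylQ eqf.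
case/and3P: (fP P sylP) => _ fPP _.
case/and3P: (fP Q sylQ) => _ _ /forallP /(_ P).
by rewrite sylP -eqf fPP /= => /eqP.
Qed.
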